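(* Let $\mathcal{H}$ be a hypertree, $B$ a basic set of $\mathcal{H}$, and $u,v$ elements of $B$ lying in different connected components of the 2-section of $\overline{\mathcal{H}_B}$. Then $B=\bigcup_{T\in\tau(\mathcal{H})} V(T[u,v])$, where $\tau(\mathcal{H})$ is the set of all host trees of $\mathcal{H}$ and $T[u,v]$ is the path from $u$ to $v$ in $T$.
   Context: A hypergraph $\mathcal{H}$ has a finite vertex set $V(\mathcal{H})$ and a finite family of nonempty subsets (edges). A host tree is a tree on $V(\mathcal{H})$ in which every edge induces a connected subgraph; a hypertree is a hypergraph with a host tree. For $A\subseteq V(\mathcal{H})$, $\overline{\mathcal{H}_A}$ is the hypergraph on $V(\mathcal{H})$ whose edges are the edges of $\mathcal{H}$ not containing $A$. The 2-section of a hypergraph is the graph on its vertices where two distinct vertices are adjacent iff some edge contains both. A union of sets is connected if the intersection graph of the sets is connected. $Comp(\mathcal{H})$ is the hypergraph without repeated edges on $V(\mathcal{H})$ whose edges are $V(\mathcal{H})$, all singletons, and all proper subsets obtainable from edges of $\mathcal{H}$ by repeated nonempty intersections and connected unions; a basic set is an edge of $Comp(\mathcal{H})$ with more than one vertex that is not a connected union of strictly smaller edges of $Comp(\mathcal{H})$. *)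

(* Defs.v *)
From mathcomp Require Import all_boot.
Set Implicit Arguments. Unset Strict Implicit. Unset Printing Implicit Defensive.

(* A hypergraph on the finite vertex type V is an edge family E : {set {set V}}
   (repetitions of edges are irrelevant for all notions below). *)

Section Hyper.
Variable V : finType.

Definition gadj (T : {set {set V}}) : rel V := fun x y => [set x; y] \in T.

Definition is_tree (T : {set {set V}}) : Prop :=
  (forall e, e \in T -> #|e| = 2) /\
  (forall x y, connect (gadj T) x y) /\
  (* acyclic: no simple cycle of length >= 3 *)
  (forall (x : V) (p : seq V), 2 <= size p -> uniq (x :: p) -> ~~ cycle (gadj T) (x :: p)).

(* vertex set of the path T[u,v] (unique in a tree) *)
Definition on_path (T : {set {set V}}) (u v w : V) : Prop :=
  exists p : seq V, [/\ path (gadj T) u p, last u p = v, uniq (u :: p) & w \in u :: p].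

Definition host_tree (E : {set {set V}}) (T : {set {set V}}) : Prop :=
  is_tree T /\
  forall e, e \in E -> forall x y, x \in e -> y \in e ->
    connect [rel a b | [&& gadj T a b, a \in e & b \in e]] x y.

Definition hypertree (E : {set {set V}}) : Prop := exists T, host_tree E T.

Definition connected_family (F : {set {set V}}) : Prop :=
  forall X Y, X \in F -> Y \in F ->
    connect [rel A B | [&& A \in F, B \in F & A :&: B != set0]] X Y.

Inductive obtainable (E : {set {set V}}) : {set V} -> Prop :=
| ob_edge e : e \in E -> obtainable E e
| ob_inter A B : obtainable E A -> obtainable E B -> A :&: B != set0 ->
    obtainable E (A :&: B)
| ob_cunion (F : {set {set V}}) : F != set0 ->
    (forall X, X \in F -> obtainable E X) -> connected_family F ->
    obtainable E (\bigcup_(X in F) X).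

Definition comp_edge (E : {set {set V}}) (S : {set V}) : Prop :=
  S = setT \/ #|S| = 1 \/ (S \proper setT /\ obtainable E S).

Definition basic_set (E : {set {set V}}) (B : {set V}) : Prop :=
  [/\ comp_edge E B, 1 < #|B| &
    ~ exists F : {set {set V}},
        [/\ forall X, X \in F -> comp_edge E X /\ X \proper B,
            connected_family F & \bigcup_(X in F) X = B]].

Definition bar_edges (E : {set {set V}}) (A : {set V}) : {set {set V}} :=
  [set e in E | ~~ (A \subset e)].

Definition two_section (E : {set {set V}}) : rel V :=
  fun x y => (x != y) && [exists e in E, (x \in e) && (y \in e)].

End Hyper.

(* Main.v *)
Require Import Defs.
From mathcomp Require Import all_boot.
Set Implicit Arguments. Unset Strict Implicit. Unset Printing Implicit Defensive.

Section S.
Variable V : finType.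
Implicit Types (T F : {set {set V}}) (x y a b c d p q : V).

Lemma set2C' x y : [set x; y] = [set y; x] :> {set V}.
Proof. by rewrite setUC. Qed.

Lemma gadj_sym T : symmetric (gadj T).
Proof. by move=> x y; rewrite /gadj set2C'. Qed.

Lemma gconn_sym T : connect_sym (gadj T).
Proof. exact/sym_connect_sym/gadj_sym. Qed.

Lemma set2_eq x y p q : [set x; y] = [set p; q] :> {set V} ->
  (x = p /\ y = q) \/ (x = q /\ y = p).
Proof.
move=> h.
have hx : x \in [set p; q] by rewrite -h set21.
have hy : y \in [set p; q] by rewrite -h set22.
have hp : p \in [set x; y] by rewrite h set21.
have hq : q \in [set x; y] by rewrite h set22.
move: hx hy hp hq; rewrite !in_set2.
by do 4 (case/orP=> /eqP ?); subst; auto.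
Qed.

Lemma set2_mem z x y p q : [set x; y] = [set p; q] :> {set V} -> z \in [set x;y] -> z \in [set p;q].
Proof. by move=> ->. Qed.


Definition bridge T := forall s t, gadj T s t -> ~ connect (gadj (T :\ [set s; t])) s t.

Lemma gadjD T S x y : gadj (T :\ S) x y = ([set x; y] != S) && gadj T x y.
Proof. by rewrite /gadj in_setD1. Qed.

Lemma gadjD_sub T S : subrel (gadj (T :\ S)) (gadj T).
Proof. by move=> x y; rewrite gadjD => /andP[]. Qed.

Lemma tree_bridge T : is_tree T -> bridge T.
Proof.
move=> [sz [_ ac]] s t hst /connectP [p0 hp0 ht].
have hs2 := sz _ hst; rewrite cards2 in hs2.
have nst : s != t by case: (s != t) hs2.
case: (shortenP hp0) ht => p hp hu _ ht.
case: p hp hu ht => [|h [|h' r]] hp hu ht.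
- by rewrite ht eqxx in nst.
- rewrite /= in ht; subst h. by move: hp; rewrite /= gadjD eqxx.
- apply: (negP (ac s [:: h, h' & r] isT hu)).
  rewrite /cycle rcons_path -ht gadj_sym hst andbT.
  exact: (sub_path (@gadjD_sub T [set s; t]) hp).
Qed.

Lemma bridge_acyclic T : bridge T ->
  (forall (x : V) (p : seq V), 2 <= size p -> uniq (x :: p) -> ~~ cycle (gadj T) (x :: p)).
Proof.
move=> br x [|h [|h' r]] // _ hu; apply/negP; rewrite /cycle rcons_path => /andP[hpath hl].
have [hxh hp] : gadj T x h /\ path (gadj T) h (h' :: r) by apply/andP.
set y := last h' r; have {}hl : gadj T y x := hl.
apply: (br _ _ hl); rewrite gconn_sym.
apply/connectP; exists [:: h, h' & r] => //=.
have hxy : x != y.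
  apply/negP => /eqP ex; move: hu; rewrite ex /y => /andP[/negP hn] _; apply: hn.
  by rewrite in_cons (mem_last h' r) orbT.
have hhy : h != y.
  apply/negP => /eqP ex; move: hu; rewrite ex /y => /andP[_ /andP[/negP hn] _]; apply: hn.
  by rewrite (mem_last h' r).
rewrite gadjD hxh andbT.
have hxnot : all (predC1 x) (h :: h' :: r).
  by move: hu => /andP [hu _]; apply/allP => z hz /=; apply: contraNneq hu => ezx; by rewrite -ezx.
apply/andP; split.
  apply/negP => /eqP /set2_eq [[e _]|[_ e]].
  - by rewrite e eqxx in hxy.
  - by rewrite e eqxx in hhy.
apply: (sub_in_path _ hxnot hp) => a b ha hb hab.
rewrite gadjD hab andbT; apply/negP => /eqP hE.
have : x \in [set a; b] by rewrite hE set22.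
by rewrite in_set2 => /orP [] /eqP ex; [move: ha | move: hb]; rewrite inE ex eqxx.
Qed.

Lemma conn_add (G G' : rel V) p q :
  (forall x y, G' x y -> G x y \/ (x = p /\ y = q) \/ (x = q /\ y = p)) ->
  forall x y, connect G' x y ->
  connect G x y \/ (connect G x p /\ connect G q y) \/ (connect G x q /\ connect G p y).
Proof.
move=> hG x y /connectP [s hs ->]; elim: s x hs => [|h s IH] x /=.
  by left; apply: connect0.
case/andP => hxh /IH {IH} IH.
case: (hG _ _ hxh) => [g|[[ex eh]|[ex eh]]].
- have cx := connect1 g.
  case: IH => [c|[[c1 c2]|[c1 c2]]].
  + by left; apply: connect_trans cx c.
  + by right; left; split => //; apply: connect_trans cx c1.
  + by right; right; split => //; apply: connect_trans cx c1.
- subst x h; case: IH => [c|[[c1 c2]|[c1 c2]]].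
  + by right; left; split => //; apply: connect0.
  + by right; left; split => //; apply: connect0.
  + by left.
- subst x h; case: IH => [c|[[c1 c2]|[c1 c2]]].
  + by right; right; split => //; apply: connect0.
  + by left.
  + by right; right; split => //; apply: connect0.
Qed.


Lemma gadjD_avoid T s z a b : a != z -> b != z -> gadj T a b -> gadj (T :\ [set s; z]) a b.
Proof.
move=> az bz hab; rewrite gadjD hab andbT; apply/negP => /eqP hE.
have : z \in [set a; b] by rewrite hE set22.
by rewrite in_set2 => /orP [] /eqP ez; [move: az | move: bz]; rewrite ez eqxx.
Qed.

Lemma path_avoid T s z x (l : seq V) : path (gadj T) x l -> z \notin x :: l ->
  path (gadj (T :\ [set s; z])) x l.
Proof.
move=> hp hz; apply: (@sub_in_path _ (predC1 z) _ _ _ x l _ hp).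
  by move=> a b ha hb; apply: gadjD_avoid.
by apply/allP => w hw /=; apply: contraNneq hz => <-.
Qed.

Lemma key T : bridge T -> forall x (p q : seq V) z, path (gadj T) x p -> uniq (x :: p) ->
  path (gadj T) x q -> last x p = last x q -> z \in x :: p -> z \in x :: q.
Proof.
move=> br x p q z hp hu hq hl hz; apply/negPn/negP => hzq.
have zx : z != x by apply: contraNneq hzq => ->; apply: mem_head.
have zp : z \in p by move: hz; rewrite in_cons (negPf zx).
case/splitPr: zp hp hu hl => p1 p2 hp hu hl.
set s := last x p1.
move: hp; rewrite cat_path => /andP [hp1 /andP [hsz hp2]].
move: hu; rewrite -cat_cons cat_uniq => /and3P [_ hdis _].
have zn1 : z \notin x :: p1 by apply: contra hdis => h; apply/hasP; exists z => //; apply: mem_head.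
have sn2 : s \notin z :: p2 by apply: contra hdis => h; apply/hasP; exists s => //; apply: mem_last.
have F1 := path_avoid s hp1 zn1.
have F2 : path (gadj (T :\ [set s; z])) z p2.
  by rewrite set2C'; apply: path_avoid.
have Fq := path_avoid s hq hzq.
apply: (br _ _ hsz).
have c1 : connect (gadj (T :\ [set s; z])) x s by apply/connectP; exists p1.
have c2 : connect (gadj (T :\ [set s; z])) z (last x q).
  by apply/connectP; exists p2 => //; rewrite -hl last_cat.
have c3 : connect (gadj (T :\ [set s; z])) x (last x q) by apply/connectP; exists q.
rewrite gconn_sym in c1; rewrite gconn_sym in c2.
exact: connect_trans c1 (connect_trans c3 c2).
Qed.


Definition ind T (S : {set V}) : rel V := [rel a b | [&& gadj T a b, a \in S & b \in S]].
Definition cnx T (S : {set V}) := forall x y, x \in S -> y \in S -> connect (ind T S) x y.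

Lemma ind_path_all T S x (l : seq V) : path (ind T S) x l -> x \in S -> all (mem S) (x :: l).
Proof.
elim: l x => [|h l IH] x; first by move=> _ /= ->.
move=> /andP [/and3P [_ hx hh] hp] _.
by rewrite /= hx /=; apply: IH.
Qed.

Lemma ind_gadj T S : subrel (ind T S) (gadj T).
Proof. by move=> a b /and3P []. Qed.

Lemma cnx_convex T S : bridge T -> cnx T S -> forall x (p : seq V),
  path (gadj T) x p -> uniq (x :: p) -> x \in S -> last x p \in S -> all (mem S) (x :: p).
Proof.
move=> br hS x p hp hu hx hy.
case/connectP: (hS _ _ hx hy) => q hq hl.
have hall := ind_path_all hq hx.
apply/allP => z hz.
have := key br hp hu (sub_path (@ind_gadj T S) hq) hl hz.
by move/(allP hall).
Qed.

Lemma cnx_inter T A B : bridge T -> cnx T A -> cnx T B -> cnx T (A :&: B).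
Proof.
move=> br hA hB x y; rewrite !inE => /andP [xA xB] /andP [yA yB].
case/connectP: (hA _ _ xA yA) => q0 hq0 ey.
case: (shortenP hq0) ey => p hp hu _ ey; rewrite ey in yB *.
have allA := ind_path_all hp xA.
have hpT := sub_path (@ind_gadj T A) hp.
have allB := cnx_convex br hB hpT hu xB yB.
apply/connectP; exists p => //.
apply: (@sub_in_path _ (mem (A :&: B)) _ _ _ x p _ hp).
  move=> a b ha hb /and3P [g _ _]; apply/and3P; split => //.
apply/allP => z hz; have h1 : z \in A := allP allA _ hz; have h2 : z \in B := allP allB _ hz.
change (z \in A :&: B); by rewrite in_setI h1.
Qed.


Lemma ind_sub T (S S' : {set V}) : S \subset S' -> subrel (ind T S) (ind T S').
Proof.
move=> sS a b /and3P [g ha hb]; apply/and3P; split => //; exact: (subsetP sS).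
Qed.

Lemma conn_ind_sub T (S S' : {set V}) x y : S \subset S' -> connect (ind T S) x y -> connect (ind T S') x y.
Proof.
move=> sS; apply: connect_sub => a b h; apply: connect1; exact: ind_sub h.
Qed.

Lemma cnx_union T (F : {set {set V}}) : (forall X, X \in F -> cnx T X) ->
  connected_family F -> cnx T (\bigcup_(X in F) X).
Proof.
move=> hF hc x y /bigcupP [X XF xX] /bigcupP [Y YF yY].
set U := \bigcup_(X in F) X.
have sub : forall Z, Z \in F -> Z \subset U by move=> Z ZF; apply: bigcup_sup.
pose Q Z := Z \in F /\ forall z, z \in Z -> connect (ind T U) x z.
case/connectP: (hc X Y XF YF) => l hl eY.
suff : Q (last X l) by rewrite -eY => [[_ ->]].
have QX : Q X.
  by split => // z zX; apply: (conn_ind_sub (sub _ XF)); apply: hF.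
clear xX; elim: l X XF hl {eY} QX => [|Z l IH] X XF //=.
case/andP => /and3P [_ ZF hne] hl QX.
case/set0Pn: hne => c; rewrite in_setI => /andP [cX cZ].
have cZ' : c \in Z := cZ.
have xc : connect (ind T U) x c by apply: QX.2.
apply: (IH Z ZF) => //.
split => // z zZ.
apply: connect_trans xc _.
apply: (conn_ind_sub (sub _ ZF)); exact: hF.
Qed.


Lemma obt_cnx E T S : host_tree E T -> obtainable E S -> cnx T S.
Proof.
move=> [tr he] hS; have br := tree_bridge tr.
elim: hS => [e eE|A B _ hA _ hB _|F _ _ hX hc].
- by move=> x y hx hy; apply: he.
- exact: cnx_inter.
- exact: cnx_union.
Qed.

Lemma comp_cnx E T S : host_tree E T -> comp_edge E S -> cnx T S.
Proof.
move=> hT [->|[/eqP /cards1P [z ->]|[_ hS]]].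
- move=> x y _ _; case: hT => [[_ [hc _]] _].
  apply: connect_sub (hc x y) => c d h; apply: connect1; apply/and3P; split => //; exact: in_setT.
- by move=> x y; rewrite !in_set1 => /eqP -> /eqP ->; apply: connect0.
- exact: obt_cnx hS.
Qed.

Lemma ind_sym T S : symmetric (ind T S).
Proof.
move=> x y; apply/and3P/and3P => [] [g h1 h2]; split => //; by rewrite gadj_sym.
Qed.


Section Exch.
Variables (T : {set {set V}}) (a b x1 x2 : V).
Hypothesis trT : is_tree T.
Hypothesis abT : gadj T a b.
Local Notation F := (T :\ [set a; b]).
Hypothesis x1a : connect (gadj F) x1 a.
Hypothesis x2b : connect (gadj F) x2 b.
Local Notation T' := (F :|: [set [set x1; x2]]).

Lemma gadjT' x y : gadj T' x y = gadj F x y || ([set x; y] == [set x1; x2]).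
Proof. by rewrite /gadj in_setU in_set1. Qed.

Lemma F_T' : subrel (gadj F) (gadj T').
Proof. by move=> x y h; rewrite gadjT' h. Qed.

Lemma cF_T' x y : connect (gadj F) x y -> connect (gadj T') x y.
Proof. by apply: connect_sub => c d h; apply/connect1/F_T'. Qed.

Lemma T_split x y : gadj T x y -> gadj F x y \/ (x = a /\ y = b) \/ (x = b /\ y = a).
Proof.
move=> h; case: (eqVneq [set x; y] [set a; b]) => [/set2_eq|ne]; first by right.
by left; rewrite gadjD ne.
Qed.

Lemma both_false s : connect (gadj F) s a -> connect (gadj F) s b -> False.
Proof.
move=> sa sb; apply: (tree_bridge trT abT).
by rewrite gconn_sym in sa; apply: connect_trans sa sb.
Qed.

Lemma sides z : connect (gadj F) z a \/ connect (gadj F) z b.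
Proof.
case: trT => [_ [hc _]].
by case: (conn_add T_split (hc z a)) => [|[[h _]|[h _]]]; auto.
Qed.

Lemma x12 : x1 != x2.
Proof.
apply/negP => /eqP e; apply: (@both_false x1) => //; by rewrite e.
Qed.

Lemma T'_bridge : bridge T'.
Proof.
move=> c d hcd.
case: (eqVneq [set c; d] [set x1; x2]) => [ecd|ncd].
  move=> hc; have hcF : connect (gadj F) c d.
    apply: connect_sub hc => y z h; apply: connect1.
    move: h; rewrite gadjD gadjT' => /andP [ne /orP [//|/eqP e]].
    by rewrite e ecd eqxx in ne.
  case: (set2_eq ecd) => [[-> ->]|[-> ->]] in hcF.
    by apply: (@both_false x1) => //; apply: connect_trans hcF x2b.
  by apply: (@both_false x2) => //; [apply: connect_trans hcF x1a].
have hF : gadj F c d by move: hcd; rewrite gadjT' (negPf ncd) orbF.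
have hT : gadj T c d by apply: gadjD_sub hF.
move=> hc.
have spl : forall y z, gadj (T' :\ [set c; d]) y z ->
   gadj (F :\ [set c; d]) y z \/ (y = x1 /\ z = x2) \/ (y = x2 /\ z = x1).
  move=> y z; rewrite gadjD gadjT' => /andP [ne /orP [h|/eqP e]].
    by left; rewrite gadjD ne.
  by right; apply: set2_eq.
have sub1 : forall y z, connect (gadj (F :\ [set c; d])) y z -> connect (gadj F) y z.
  move=> y z; apply: connect_sub => s t h; apply/connect1; exact: gadjD_sub h.
have cd1 := connect1 hF.
have dc1 : connect (gadj F) d c by apply: connect1; rewrite gadj_sym.
case: (conn_add spl hc) => [h|[[h1 h2]|[h1 h2]]].
- apply: (tree_bridge trT hT).
  apply: connect_sub h => s t h; apply/connect1.
  move: h; rewrite !gadjD => /andP [-> /andP [_ ->]]; done.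
- apply: (@both_false c); first by apply: connect_trans (sub1 _ _ h1) x1a.
  apply: connect_trans cd1 _; rewrite gconn_sym in h2.
  exact: connect_trans (sub1 _ _ h2) x2b.
- apply: (@both_false c); last by apply: connect_trans (sub1 _ _ h1) x2b.
  apply: connect_trans cd1 _; rewrite gconn_sym in h2.
  exact: connect_trans (sub1 _ _ h2) x1a.
Qed.

Lemma T'_tree : is_tree T'.
Proof.
case: (trT) => [sz [hc ac]]; split; last split.
- move=> e; rewrite in_setU in_set1 => /orP [|/eqP ->].
    by rewrite in_setD1 => /andP [_ /sz].
  by rewrite cards2 x12.
- have ha : forall z, connect (gadj T') z a.
    have ba : connect (gadj T') b a.
      have bx2 : connect (gadj F) b x2 by rewrite gconn_sym.
      apply: connect_trans (cF_T' bx2) _.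
      apply: (connect_trans _ (cF_T' x1a)).
      by apply: connect1; rewrite gadj_sym gadjT' eqxx orbT.
    move=> z; case: (sides z) => h; first exact: cF_T'.
    exact: connect_trans (cF_T' h) ba.
  move=> x y; apply: connect_trans (ha x) _; rewrite gconn_sym; exact: ha.
- exact: bridge_acyclic T'_bridge.
Qed.


Lemma T'_host (E : {set {set V}}) :
  (forall e, e \in E -> forall x y, x \in e -> y \in e -> connect (ind T e) x y) ->
  (forall e, e \in E -> a \in e -> b \in e -> x1 \in e /\ x2 \in e) ->
  forall e, e \in E -> forall x y, x \in e -> y \in e -> connect (ind T' e) x y.
Proof.
move=> he hab e eE x y xe ye.
have subFT' : forall s t, connect (ind F e) s t -> connect (ind T' e) s t.
  apply: connect_sub => s t /and3P [g hs ht]; apply: connect1; apply/and3P; split => //.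
  exact: F_T'.
have isym : connect_sym (ind T' e) by apply/sym_connect_sym/ind_sym.
case: (boolP ((a \in e) && (b \in e))) => [/andP [ae be] | nab].
- have [x1e x2e] := hab e eE ae be.
  have spl : forall s t, ind T e s t -> ind F e s t \/ (s = a /\ t = b) \/ (s = b /\ t = a).
    move=> s t /and3P [g hs ht]; case: (T_split g) => [h|h]; last by right.
    by left; apply/and3P.
  have side : forall z, z \in e -> connect (ind F e) z a \/ connect (ind F e) z b.
    move=> z ze; case: (conn_add spl (he e eE z a ze ae)) => [|[[h _]|[h _]]]; auto.
  have indF : forall s t, connect (ind F e) s t -> connect (gadj F) s t.
    by move=> s t; apply: connect_sub => s1 t1 h; apply: connect1; exact: ind_gadj h.
  have x1a' : connect (ind F e) x1 a.
    case: (side x1 x1e) => // h; case: (both_false x1a (indF _ _ h)).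
  have x2b' : connect (ind F e) x2 b.
    case: (side x2 x2e) => // h; case: (both_false (indF _ _ h) x2b).
  have ba : connect (ind T' e) b a.
    have bx2 : connect (ind T' e) b x2 by rewrite isym; apply: subFT'.
    apply: connect_trans bx2 _; apply: (connect_trans _ (subFT' _ _ x1a')).
    apply: connect1; apply/and3P; split => //.
    by rewrite gadj_sym gadjT' eqxx orbT.
  have ha : forall z, z \in e -> connect (ind T' e) z a.
    move=> z ze; case: (side z ze) => h; first exact: subFT'.
    exact: connect_trans (subFT' _ _ h) ba.
  by apply: connect_trans (ha x xe) _; rewrite isym; apply: ha.
- apply: subFT'; apply: connect_sub (he e eE x y xe ye) => s t /and3P [g hs ht].
  apply: connect1; case: (T_split g) => [h|[[es et]|[es et]]].
  + by apply/and3P.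
  + by subst s t; rewrite hs ht in nab.
  + by subst s t; rewrite hs ht in nab.
Qed.

Lemma T'_path u v w : connect (gadj F) u a -> connect (gadj F) v b ->
  (w = x1 \/ w = x2) -> on_path T' u v w.
Proof.
move=> ua vb hw.
have ux1 : connect (gadj F) u x1 by apply: connect_trans ua _; rewrite gconn_sym.
have x2v : connect (gadj F) x2 v by apply: connect_trans x2b _; rewrite gconn_sym.
case/connectP: ux1 => q1' hq1' e1; case: (shortenP hq1') e1 => q1 hq1 hu1 _ e1.
case/connectP: x2v => q2' hq2' e2; case: (shortenP hq2') e2 => q2 hq2 hu2 _ e2.
exists (q1 ++ x2 :: q2); split.
- rewrite cat_path (sub_path F_T' hq1) /= -e1.
  apply/andP; split; first by rewrite gadjT' eqxx orbT.
  move: hq2; apply: sub_path; exact: F_T'.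
- by rewrite last_cat e2.
- rewrite -cat_cons cat_uniq hu1 hu2 andbT andTb.
  apply/hasPn => z hz; apply/negP => hz1.
  have c1 := path_connect hq1 hz1.
  have c2 := path_connect hq2 hz.
  apply: (@both_false z).
    rewrite gconn_sym in c1; exact: connect_trans c1 ua.
  rewrite gconn_sym in c2; exact: connect_trans c2 x2b.
- case: hw => ->.
    by rewrite -cat_cons mem_cat e1 mem_last.
  by rewrite in_cons mem_cat in_cons eqxx !orbT.
Qed.

End Exch.


Lemma first_fail (P : pred V) x (p : seq V) : P x -> ~~ P (last x p) ->
  exists (p1 : seq V) (b : V) (p2 : seq V), [/\ p = p1 ++ b :: p2, all P (x :: p1) & ~~ P b].
Proof.
elim: p x => [|h t IH] x /=; first by move=> ->.
move=> Px Pl; case: (boolP (P h)) => Ph.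
  case: (IH h Ph Pl) => p1 [b [p2 [-> h1 h2]]].
  by exists (h :: p1), b, p2; rewrite /= Px.
by exists [::], h, t; rewrite /= Px.
Qed.

Lemma two_sym (E : {set {set V}}) : symmetric (two_section E).
Proof.
move=> x y; rewrite /two_section eq_sym; congr (_ && _).
by apply/existsP/existsP => [] [e /andP [eE /andP [h1 h2]]]; exists e; rewrite eE h1 h2.
Qed.

End S.

Theorem mainTheorem17 (V : finType) (E : {set {set V}}) (B : {set V}) (u v : V) :
  set0 \notin E ->
  hypertree E ->
  basic_set E B ->
  u \in B -> v \in B ->
  ~~ connect (two_section (bar_edges E B)) u v ->
  forall w : V, w \in B <-> exists T, host_tree E T /\ on_path T u v w.
Proof.
move=> _ [T0 hT0] hB uB vB nuv w; split; last first.
  move=> [T [hT [p [hp hl hu hw]]]].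
  case: hB => hc _ _.
  have cB := comp_cnx hT hc.
  have br := tree_bridge hT.1.
  have allS := cnx_convex br cB hp hu uB (etrans (congr1 _ hl) vB).
  exact: (allP allS w hw).
move=> wB.
have [tr he] := hT0.
set R := connect (two_section (bar_edges E B)).
have Rsym : connect_sym (two_section (bar_edges E B)) by apply/sym_connect_sym/two_sym.
case/connectP: (tr.2.1 u v) => p0 hp0 ev.
case: (shortenP hp0) ev => p hp hu _ ev.
have [p1 [b [p2 [ep allu nb]]]] : exists p1 b p2,
   [/\ p = p1 ++ b :: p2, all (R u) (u :: p1) & ~~ R u b].
  apply: first_fail; first exact: connect0.
  by rewrite -ev.
subst p.
set a := last u p1.
move: hp; rewrite cat_path => /andP [hp1 /andP [hab hp2]].
have nab : ~~ R a b.
  apply: contra nb => h; apply: connect_trans h.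
  exact: (allP allu _ (mem_last _ _)).
have ab2 : a != b.
  have := tr.1 _ hab; rewrite cards2; by case: (a != b).
have bn1 : b \notin u :: p1.
  by apply/negP => /(allP allu) h; rewrite h in nb.
move: hu; rewrite -cat_cons cat_uniq => /and3P [_ hdis _].
have an2 : a \notin b :: p2.
  by apply: contra hdis => h; apply/hasP; exists a => //; apply: mem_last.
have F1 := path_avoid a hp1 bn1.
have F2 : path (gadj (T0 :\ [set a; b])) b p2 by rewrite set2C'; apply: path_avoid.
have ua : connect (gadj (T0 :\ [set a; b])) u a by apply/connectP; exists p1.
have vb : connect (gadj (T0 :\ [set a; b])) v b.
  by rewrite gconn_sym; apply/connectP; exists p2; rewrite // ev last_cat.
have habe : forall e, e \in E -> a \in e -> b \in e -> B \subset e.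
  move=> e eE ae be; apply/negPn/negP => nBe.
  move: nab; rewrite /R => /negP; apply; apply: connect1.
  rewrite /two_section ab2 /=; apply/existsP; exists e.
  by rewrite inE eE nBe ae be.
case: (sides a b tr w) => hw.
- exists ((T0 :\ [set a; b]) :|: [set [set w; b]]); split; first split.
  + exact: (T'_tree tr hab hw (connect0 _ _)).
  + apply: (T'_host tr hab hw (connect0 _ _) he) => e eE ae be.
    have sB := habe e eE ae be.
    by rewrite (subsetP sB _ wB).
  + apply: (T'_path tr hab hw (connect0 _ _) ua vb); by left.
- exists ((T0 :\ [set a; b]) :|: [set [set a; w]]); split; first split.
  + exact: (T'_tree tr hab (connect0 _ _) hw).
  + apply: (T'_host tr hab (connect0 _ _) hw he) => e eE ae be.
    have sB := habe e eE ae be.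
    by rewrite (subsetP sB _ wB).
  + apply: (T'_path tr hab (connect0 _ _) hw ua vb); by right.
Qed.
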